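(* $$\sum_{n=1}^\infty \frac{H_n \binom{2n}{n}}{(n+1)^2\, 2^{2n}} = -\frac{\pi^2}{3} - 4(\log 2)^2 + 8\log 2.$$
   Context: $H_n=\sum_{k=1}^n \frac{1}{k}$ denotes the $n$-th harmonic number and $\binom{2n}{n}$ the central binomial coefficient; $\log$ is the natural logarithm. *)

(* Defs.v *)
From Stdlib Require Import Reals.
From Coquelicot Require Import Coquelicot.
Open Scope R_scope.

Fixpoint harmonic (n : nat) : R :=
  match n with
  | O => 0
  | S m => harmonic m + / INR (S m)
  end.

Definition central_binom (n : nat) : R := Binomial.C (2 * n) n.

Definition term (n : nat) : R :=
  harmonic n * central_binom n / ((INR n + 1) ^ 2 * 2 ^ (2 * n)).

(* Main.v *)
Require Import Defs.
From Stdlib Require Import Reals.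
From Coquelicot Require Import Coquelicot.
From Stdlib Require Import Lra Lia.
Open Scope R_scope.

Lemma d_mult (f g : R -> R) x df dg : is_derive f x df -> is_derive g x dg ->
  is_derive (fun t => f t * g t) x (df * g x + f x * dg).
Proof. intros. apply (is_derive_mult f g x df dg); auto. intros; apply Rmult_comm. Qed.
Lemma d_comp (f g : R -> R) x df dg : is_derive f (g x) df -> is_derive g x dg ->
  is_derive (fun t => f (g t)) x (dg * df).
Proof. intros. apply (@is_derive_comp R_AbsRing R_NormedModule f g x df dg); auto. Qed.
Lemma d_minus (f g : R -> R) x df dg : is_derive f x df -> is_derive g x dg ->
  is_derive (fun t => f t - g t) x (df - dg).
Proof. intros. apply (@is_derive_minus R_AbsRing R_NormedModule f g x df dg); auto. Qed.
Lemma d_plus (f g : R -> R) x df dg : is_derive f x df -> is_derive g x dg ->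
  is_derive (fun t => f t + g t) x (df + dg).
Proof. intros. apply (@is_derive_plus R_AbsRing R_NormedModule f g x df dg); auto. Qed.
Lemma d_eq (f : R -> R) x (d dd : R) : is_derive f x d -> d = dd -> is_derive f x dd.
Proof. intros H ->; exact H. Qed.

Lemma const_on (f : R -> R) v : 0 <= v -> (forall t, 0 <= t <= v -> is_derive f t 0) -> f v = f 0.
Proof.
  intros Hv H. destruct (Req_dec v 0) as [->|Hn]. reflexivity.
  symmetry. apply (@eq_is_derive R_NormedModule f 0 v). intros; apply H; lra. lra.
Qed.

Lemma pow_le1 (x : R) n : 0 <= x <= 1 -> 0 <= x ^ n <= 1.
Proof. intros H. induction n; simpl; nra. Qed.

Lemma rad_bounded (a : nat -> R) M : (forall n, Rabs (a n) <= M) ->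
  forall x, Rabs x < 1 -> Rbar_lt (Rabs x) (CV_radius a).
Proof.
  intros HM x Hx. destruct (CV_radius_bounded a) as [Hub _].
  set (r := (Rabs x + 1)/2).
  assert (Hr : Rbar_le r (CV_radius a)).
  { apply Hub. exists M. intros n. rewrite Rabs_mult. rewrite <- RPow_abs.
    assert (0 <= Rabs x) by apply Rabs_pos.
    assert (0 <= Rabs r <= 1) by (split; [apply Rabs_pos| unfold r; rewrite Rabs_pos_eq; lra]).
    destruct (pow_le1 (Rabs r) n H0). pose proof (Rabs_pos (a n)). specialize (HM n). nra. }
  assert (Rabs x < r) by (unfold r; lra).
  destruct (CV_radius a) as [l| |]; simpl in *; lra.
Qed.

Lemma ex_ps (a : nat -> R) x : Rbar_lt (Rabs x) (CV_radius a) -> ex_series (fun k => a k * x ^ k).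
Proof. intros H. apply ex_series_Rabs. apply CV_disk_inside. exact H. Qed.

Lemma series_lim (a : nat -> R) (l : R) : is_lim_seq (fun N => sum_f_R0 a N) l -> is_series a l.
Proof.
  intros H. apply (is_lim_seq_ext _ (sum_n a)) in H. exact H. intros; rewrite sum_n_Reals; reflexivity.
Qed.
Lemma lim_series (a : nat -> R) (l : R) : is_series a l -> is_lim_seq (fun N => sum_f_R0 a N) l.
Proof.
  intros H. apply (is_lim_seq_ext (sum_n a)). intros; rewrite sum_n_Reals; reflexivity. exact H.
Qed.

Lemma sum_mono (b : nat -> R) N n : (forall k, 0 <= b k) -> sum_f_R0 b N <= sum_f_R0 b (n + N).
Proof. intros Hb. induction n. simpl; lra. simpl (S n + N)%nat. rewrite tech5. specialize (Hb (S (n+N))). lra. Qed.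

Lemma partial_le_lim (b : nat -> R) N l : (forall k, 0 <= b k) -> is_series b l -> sum_f_R0 b N <= l.
Proof.
  intros Hb He. apply lim_series in He.
  apply (is_lim_seq_incr_n _ N) in He.
  assert (H := is_lim_seq_le (fun _ => sum_f_R0 b N) _ _ _ (fun n => sum_mono b N n Hb) (is_lim_seq_const _) He).
  exact H.
Qed.

Lemma partial_le_series (b : nat -> R) N : (forall k, 0 <= b k) -> ex_series b -> sum_f_R0 b N <= Series b.
Proof. intros Hb He. apply partial_le_lim; auto. apply Series_correct, He. Qed.

Lemma lim_pow (x : nat -> R) k : is_lim_seq x 1 -> is_lim_seq (fun m => x m ^ k) 1.
Proof.
  intros H. induction k. simpl. apply is_lim_seq_const.
  simpl. assert (K := is_lim_seq_mult' x (fun m => x m ^ k) _ _ H IHk). rewrite Rmult_1_r in K. exact K.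
Qed.

Lemma lim_partial (a x : nat -> R) N : is_lim_seq x 1 ->
  is_lim_seq (fun m => sum_f_R0 (fun k => a k * x m ^ k) N) (sum_f_R0 a N).
Proof.
  intros H. induction N.
  - simpl. apply (is_lim_seq_ext (fun _ => a 0%nat)). intros; ring. apply is_lim_seq_const.
  - simpl. apply (is_lim_seq_plus' _ (fun m => a (S N) * x m ^ (S N))). exact IHN.
    assert (K := is_lim_seq_mult' (fun _ => a (S N)) _ _ _ (is_lim_seq_const _) (lim_pow x (S N) H)).
    rewrite Rmult_1_r in K. exact K.
Qed.

Lemma tauber (a x : nat -> R) (L : R) : (forall n, 0 <= a n) -> (forall m, 0 <= x m < 1) ->
  (forall m, ex_series (fun k => a k * x m ^ k)) -> is_lim_seq x 1 ->
  is_lim_seq (fun m => PSeries a (x m)) L -> is_series a L.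
Proof.
  intros Ha Hx Hex Hl HL.
  assert (B : forall N, sum_f_R0 a N <= L).
  { intros N. assert (K := is_lim_seq_le _ _ _ _ (fun m => partial_le_series (fun k => a k * x m ^ k) N
        (fun k => Rmult_le_pos _ _ (Ha k) (pow_le _ _ (proj1 (Hx m)))) (Hex m)) (lim_partial a x N Hl) HL).
    exact K. }
  assert (I : forall N, sum_f_R0 a N <= sum_f_R0 a (S N)) by (intros; rewrite tech5; specialize (Ha (S N)); lra).
  destruct (ex_finite_lim_seq_incr _ L I B) as [A HA].
  assert (AL : A <= L). { assert (K := is_lim_seq_le _ _ _ _ B HA (is_lim_seq_const L)). exact K. }
  assert (LA : L <= A).
  { assert (P : forall m, PSeries a (x m) <= A).
    { intros m. unfold PSeries. assert (is_series a A) by (apply series_lim; exact HA).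
      rewrite <- (is_series_unique _ _ H). apply Series_le. intros k. split.
      apply Rmult_le_pos. apply Ha. apply pow_le, Hx.
      destruct (pow_le1 (x m) k) as [_ P1]. split; [apply Hx| left; apply Hx]. specialize (Ha k). nra.
      exists A. exact H. }
    assert (K := is_lim_seq_le _ _ _ _ P HL (is_lim_seq_const A)). exact K. }
  apply series_lim. replace L with A by lra. exact HA.
Qed.

Lemma abel_pos (a x : nat -> R) (A : R) : (forall n, 0 <= a n) -> (forall m, 0 <= x m < 1) ->
  is_lim_seq x 1 -> is_series a A -> is_lim_seq (fun m => PSeries a (x m)) A.
Proof.
  intros Ha Hx Hl HA.
  assert (Hex : forall m, ex_series (fun k => a k * x m ^ k)).
  { intros m. apply (@ex_series_le R_AbsRing R_CompleteNormedModule _ a).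
    intros k. unfold norm; simpl. rewrite Rabs_pos_eq. destruct (pow_le1 (x m) k) as [P0 P1]. split; [apply Hx| left; apply Hx].
    specialize (Ha k). nra. apply Rmult_le_pos. apply Ha. apply pow_le, Hx. exists A; exact HA. }
  assert (Up : forall m, PSeries a (x m) <= A).
  { intros m. unfold PSeries. rewrite <- (is_series_unique _ _ HA). apply Series_le. intros k. split.
      apply Rmult_le_pos. apply Ha. apply pow_le, Hx.
      destruct (pow_le1 (x m) k) as [_ P1]. split; [apply Hx| left; apply Hx]. specialize (Ha k). nra.
      exists A. exact HA. }
  apply is_lim_seq_spec. intros eps.
  pose proof (lim_series _ _ HA) as HS. apply is_lim_seq_spec in HS.
  destruct (HS (pos_div_2 eps)) as [N HN]. specialize (HN N (le_n N)). simpl in HN.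
  pose proof (lim_partial a x N Hl) as HP. apply is_lim_seq_spec in HP.
  destruct (HP (pos_div_2 eps)) as [M HM]. exists M. intros m Hm. specialize (HM m Hm). simpl in HM.
  pose proof (partial_le_series (fun k => a k * x m ^ k) N (fun k => Rmult_le_pos _ _ (Ha k) (pow_le _ _ (proj1 (Hx m)))) (Hex m)).
  specialize (Up m). unfold PSeries in *.
  apply Rabs_def1; apply Rabs_def2 in HN; apply Rabs_def2 in HM; destruct eps; simpl in *; lra.
Qed.

Lemma cont_cospow k (x:R) : continuous (fun x => cos x ^ k) x.
Proof. apply (@ex_derive_continuous R_AbsRing R_NormedModule). auto_derive. trivial. Qed.
Lemma cont_x2cospow k (x:R) : continuous (fun x => x^2 * cos x ^ k) x.
Proof. apply (@ex_derive_continuous R_AbsRing R_NormedModule). auto_derive. trivial. Qed.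
Lemma cont_sin2cospow k (x:R) : continuous (fun x => sin x ^ 2 * cos x ^ k) x.
Proof. apply (@ex_derive_continuous R_AbsRing R_NormedModule). auto_derive. trivial. Qed.

Lemma RInt_deriv (f df : R->R) a b : (forall x, Rmin a b <= x <= Rmax a b -> is_derive f x (df x)) ->
  (forall x, Rmin a b <= x <= Rmax a b -> continuous df x) -> is_RInt df a b (f b - f a).
Proof. intros H1 H2. apply (@is_RInt_derive R_CompleteNormedModule f df a b H1 H2). Qed.

Lemma isR_minus (f g : R -> R) a b If Ig : is_RInt f a b If -> is_RInt g a b Ig -> is_RInt (fun x => f x - g x) a b (If - Ig).
Proof. intros. apply (@is_RInt_minus R_NormedModule); auto. Qed.
Lemma isR_plus (f g : R -> R) a b If Ig : is_RInt f a b If -> is_RInt g a b Ig -> is_RInt (fun x => f x + g x) a b (If + Ig).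
Proof. intros. apply (@is_RInt_plus R_NormedModule); auto. Qed.
Lemma isR_scal k (f : R -> R) a b If : is_RInt f a b If -> is_RInt (fun x => k * f x) a b (k * If).
Proof. intros. apply (@is_RInt_scal R_NormedModule); auto. Qed.

Definition WA n : R := RInt (fun x => cos x ^ (2*n)) 0 (PI/2).
Definition WB n : R := RInt (fun x => x^2 * cos x ^ (2*n)) 0 (PI/2).

Lemma WA_is n : is_RInt (fun x => cos x ^ (2*n)) 0 (PI/2) (WA n).
Proof. unfold WA, WB; apply (@RInt_correct R_CompleteNormedModule), (@ex_RInt_continuous R_CompleteNormedModule). intros; apply cont_cospow. Qed.
Lemma WB_is n : is_RInt (fun x => x^2 * cos x ^ (2*n)) 0 (PI/2) (WB n).
Proof. unfold WA, WB; apply (@RInt_correct R_CompleteNormedModule), (@ex_RInt_continuous R_CompleteNormedModule). intros; apply cont_x2cospow. Qed.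

Lemma pow_S2 (c:R) n : c ^ (2*n+2) = c^(2*n) * c * c.
Proof. replace (2*n+2)%nat with (2*n+1+1)%nat by lia. rewrite !pow_add. ring. Qed.
Lemma pow_S1 (c:R) n : c ^ (2*n+1) = c^(2*n) * c.
Proof. rewrite pow_add. ring. Qed.

Lemma PI2_pos : 0 < PI/2.
Proof. generalize PI_RGT_0; lra. Qed.

Lemma wallis n : INR (2*n+2) * WA (S n) = INR (2*n+1) * WA n.
Proof.
  assert (H : is_RInt (fun x => INR (2*n+2) * cos x ^ (2*n+2) - INR (2*n+1) * cos x ^ (2*n)) 0 (PI/2)
     ((fun x => sin x * cos x ^ (2*n+1)) (PI/2) - (fun x => sin x * cos x ^ (2*n+1)) 0)).
  { apply (RInt_deriv (fun x => sin x * cos x ^ (2*n+1))).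
    - intros x _. auto_derive. trivial.
      replace (n + (n + 0) + 1)%nat with (2*n+1)%nat by lia.
      replace (Init.Nat.pred (2*n+1)) with (2*n)%nat by lia.
      rewrite pow_S2, pow_S1. rewrite !plus_INR, !mult_INR. simpl INR.
      assert (Hs : sin x * sin x = 1 - cos x * cos x) by (pose proof (sin2_cos2 x); unfold Rsqr in *; lra).
      set (K := cos x ^ (2*n)). set (s := sin x) in *.
      transitivity (cos x*cos x*K - (s*s) * ((1+1)*INR n + 1) * K). ring. rewrite Hs. ring.
    - intros x _. apply (@ex_derive_continuous R_AbsRing R_NormedModule). auto_derive. trivial. }
  cbv beta in H. rewrite cos_PI2, sin_0 in H.
  replace (0 ^ (2*n+1)) with 0 in H by (rewrite pow_S1; ring).
  assert (H2 : is_RInt (fun x => INR (2*n+2) * cos x ^ (2*n+2) - INR (2*n+1) * cos x ^ (2*n)) 0 (PI/2)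
               (INR (2*n+2) * WA (S n) - INR (2*n+1) * WA n)).
  { apply (isR_minus (fun x => INR (2*n+2) * cos x ^ (2*n+2)) (fun x => INR (2*n+1) * cos x ^ (2*n))).
    - apply (isR_scal _ (fun x => cos x ^ (2*n+2))). replace (2*n+2)%nat with (2*S n)%nat by lia. apply WA_is.
    - apply (isR_scal _ (fun x => cos x ^ (2*n))). apply WA_is. }
  pose proof (is_RInt_unique _ _ _ _ H) as E1.
  pose proof (is_RInt_unique _ _ _ _ H2) as E2.
  rewrite E1 in E2. lra.
Qed.

Lemma matsuoka n : WA (S n) = INR (n+1) * INR (2*n+1) * WB n - INR (n+1) * INR (2*n+2) * WB (S n).
Proof.
  set (F := fun x => x * cos x ^ (2*n+2) + INR (n+1) * (x^2 * (sin x * cos x ^ (2*n+1)))).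
  assert (H : is_RInt (fun x => cos x ^ (2*n+2) + INR (n+1) * INR (2*n+2) * (x^2 * cos x ^ (2*n+2)) - INR (n+1) * INR (2*n+1) * (x^2 * cos x ^ (2*n))) 0 (PI/2)
     (F (PI/2) - F 0)).
  { apply (RInt_deriv F).
    - intros x _. unfold F. auto_derive. trivial.
      replace (n + (n + 0) + 1)%nat with (2*n+1)%nat by lia.
      replace (n + (n + 0) + 2)%nat with (2*n+2)%nat by lia.
      replace (Init.Nat.pred (2*n+1)) with (2*n)%nat by lia.
      replace (Init.Nat.pred (2*n+2)) with (2*n+1)%nat by lia.
      rewrite pow_S2, pow_S1. rewrite !plus_INR, !mult_INR. simpl INR.
      assert (Hs : sin x * sin x = 1 - cos x * cos x) by (pose proof (sin2_cos2 x); unfold Rsqr in *; lra).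
      set (K := cos x ^ (2*n)). set (s := sin x) in *.
      transitivity (K*cos x*cos x + (INR n + 1) * x * x * (cos x * cos x * K - (s*s) * ((1+1)*INR n + 1) * K)). ring. rewrite Hs. ring.
    - intros x _. apply (@ex_derive_continuous R_AbsRing R_NormedModule). auto_derive. trivial. }
  assert (F0 : F (PI/2) - F 0 = 0).
  { unfold F. rewrite cos_PI2, sin_0. rewrite pow_S2, pow_S1. ring. }
  rewrite F0 in H.
  assert (H2 : is_RInt (fun x => cos x ^ (2*n+2) + INR (n+1) * INR (2*n+2) * (x^2 * cos x ^ (2*n+2)) - INR (n+1) * INR (2*n+1) * (x^2 * cos x ^ (2*n))) 0 (PI/2)
               (WA (S n) + INR (n+1) * INR (2*n+2) * WB (S n) - INR (n+1) * INR (2*n+1) * WB n)).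
  { apply (isR_minus (fun x => cos x ^ (2*n+2) + INR (n+1) * INR (2*n+2) * (x^2 * cos x ^ (2*n+2))) (fun x => INR (n+1) * INR (2*n+1) * (x^2 * cos x ^ (2*n)))).
    - apply (isR_plus (fun x => cos x ^ (2*n+2))).
      + replace (2*n+2)%nat with (2*S n)%nat by lia. apply WA_is.
      + apply (isR_scal _ (fun x => x^2 * cos x ^ (2*n+2))). replace (2*n+2)%nat with (2*S n)%nat by lia. apply WB_is.
    - apply (isR_scal _ (fun x => x^2 * cos x ^ (2*n))). apply WB_is. }
  pose proof (is_RInt_unique _ _ _ _ H) as E1.
  pose proof (is_RInt_unique _ _ _ _ H2) as E2.
  rewrite E1 in E2. lra.
Qed.

Lemma WA0 : WA 0 = PI/2.
Proof.
  unfold WA. simpl. apply is_RInt_unique.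
  apply (is_RInt_ext (fun _ => 1)). intros; reflexivity.
  generalize (@is_RInt_const R_NormedModule 0 (PI/2) 1). intro H.
  replace (PI/2) with (scal (PI/2 - 0) 1) at 2. exact H. unfold scal; simpl. unfold mult; simpl. ring.
Qed.

Lemma WB0 : WB 0 = PI^3/24.
Proof.
  unfold WB. apply is_RInt_unique.
  assert (H : is_RInt (fun x => x^2 * cos x ^ (2*0)) 0 (PI/2) ((fun x => x^3/3) (PI/2) - (fun x => x^3/3) 0)).
  { apply (RInt_deriv (fun x => x^3/3)).
  - intros x _. auto_derive. trivial. simpl. field.
  - intros x _. apply (@ex_derive_continuous R_AbsRing R_NormedModule). auto_derive. trivial. }
  assert (E : (fun x => x^3/3) (PI/2) - (fun x => x^3/3) 0 = PI^3/24) by (cbv beta; field).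
  cbv beta in H. cbv beta in E. rewrite E in H. exact H.
Qed.

Lemma WA_pos n : 0 < WA n.
Proof.
  induction n. rewrite WA0. apply PI2_pos.
  pose proof (wallis n). rewrite !plus_INR, !mult_INR in H. simpl INR in H.
  pose proof (pos_INR n).
  assert (WA (S n) = ((1+1)*INR n + 1) * WA n / ((1+1)*INR n + (1+1))) by (rewrite <- H; field; lra).
  rewrite H1. apply Rdiv_lt_0_compat; nra.
Qed.

Lemma WB_nonneg n : 0 <= WB n.
Proof.
  apply (is_RInt_ge_0 (fun x => x^2 * cos x ^ (2*n)) 0 (PI/2)). generalize PI2_pos; lra. apply WB_is.
  intros. rewrite pow_mult. apply Rmult_le_pos. nra. apply pow_le. nra.
Qed.

Lemma x_le_3sin x : 0 <= x <= PI/2 -> x <= 3 * sin x.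
Proof.
  intros Hx. assert (x <= 2) by (generalize PI_4; lra).
  assert (x <= PI) by (generalize PI_RGT_0; lra).
  destruct (SIN x) as [H1 _]; try lra.
  assert (E : sin_lb x = x - x^3/6 + x^5/120 - x^7/5040).
  { unfold sin_lb, sin_approx, sin_term. simpl sum_f_R0.
    replace (INR (Factorial.fact (2*0+1))) with 1 by (rewrite INR_IZR_INZ; apply f_equal; vm_compute; reflexivity).
    replace (INR (Factorial.fact (2*1+1))) with 6 by (rewrite INR_IZR_INZ; apply f_equal; vm_compute; reflexivity).
    replace (INR (Factorial.fact (2*2+1))) with 120 by (rewrite INR_IZR_INZ; apply f_equal; vm_compute; reflexivity).
    replace (INR (Factorial.fact (2*3+1))) with 5040 by (rewrite INR_IZR_INZ; apply f_equal; vm_compute; reflexivity).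
    simpl. field. }
  rewrite E in H1.
  assert (H2 : x^2 <= 4) by nra. assert (A1 : x^3 <= 4*x) by nra.
  assert (A2 : x^7 <= 42 * x^5).
  { assert (E5 : x^7 = x^5 * x^2) by ring. rewrite E5. assert (0 <= x^5) by (apply pow_le; lra). nra. }
  assert (0 <= x^5) by (apply pow_le; lra).
  lra.
Qed.

Lemma lim_inv_n1 : is_lim_seq (fun n => / (INR n + 1)) 0.
Proof.
  assert (H := is_lim_seq_inv (fun n => INR n + 1) p_infty).
  simpl in H. apply H. 2: discriminate.
  apply (is_lim_seq_ext (fun n => INR (S n))). intros; rewrite S_INR; reflexivity.
  apply (is_lim_seq_incr_1 INR p_infty). apply is_lim_seq_INR.
Qed.

Definition li (n : nat) : R := / (INR n ^ 2).

Lemma basel_partial N : sum_f_R0 li N = PI^2/6 - 2 * WB N / WA N.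
Proof.
  induction N.
  - simpl. unfold li. simpl. rewrite WA0, WB0. rewrite Rmult_0_l, Rinv_0. field. apply PI_neq0.
  - simpl. rewrite IHN. unfold li.
    pose proof (WA_pos N). pose proof (WA_pos (S N)).
    pose proof (wallis N) as W. pose proof (matsuoka N) as M.
    assert (I1 : INR (2*N+2) = 2 * INR N + 2) by (rewrite plus_INR, mult_INR; simpl; ring).
    assert (I2 : INR (2*N+1) = 2 * INR N + 1) by (rewrite plus_INR, mult_INR; simpl; ring).
    assert (I3 : INR (N+1) = INR N + 1) by (rewrite plus_INR; simpl; ring).
    rewrite I1, I2 in W. rewrite I1, I2, I3 in M. rewrite S_INR.
    pose proof (pos_INR N).
    assert (EA : WA (S N) = (2*INR N + 1) * WA N / (2*INR N + 2)) by (rewrite <- W; field; lra).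
    assert (EB : WB (S N) = ((INR N + 1) * (2*INR N + 1) * WB N - WA (S N)) / ((INR N + 1) * (2*INR N + 2))) by (rewrite M; field; lra).
    rewrite EB. rewrite EA. field. lra.
Qed.

Lemma WB_bound N : WB N <= 9 * WA N / (INR (2*N+2)).
Proof.
  assert (H : is_RInt (fun x => 9 * (cos x ^ (2*N) - cos x ^ (2*N+2))) 0 (PI/2) (9 * (WA N - WA (S N)))).
  { apply (isR_scal _ (fun x => cos x ^ (2*N) - cos x ^ (2*N+2))).
    apply (isR_minus (fun x => cos x ^ (2*N))). apply WA_is. replace (2*N+2)%nat with (2*S N)%nat by lia. apply WA_is. }
  assert (L : WB N <= 9 * (WA N - WA (S N))).
  { apply (is_RInt_le (fun x => x^2 * cos x ^ (2*N)) (fun x => 9 * (cos x ^ (2 * N) - cos x ^ (2 * N + 2))) 0 (PI/2)). generalize PI2_pos; lra. apply WB_is. exact H.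
    intros x Hx. rewrite pow_S2.
    assert (Hs : sin x * sin x = 1 - cos x * cos x) by (pose proof (sin2_cos2 x); unfold Rsqr in *; lra).
    assert (0 <= cos x ^ (2*N)) by (rewrite pow_mult; apply pow_le; nra).
    pose proof (x_le_3sin x ltac:(lra)).
    assert (x^2 <= 9 * (sin x * sin x)) by nra.
    replace (9 * (cos x ^ (2 * N) - cos x ^ (2 * N) * cos x * cos x)) with (9 * (sin x * sin x) * cos x ^ (2*N)) by (rewrite Hs; ring).
    nra. }
  pose proof (wallis N) as W. pose proof (WA_pos N).
  assert (I1 : INR (2*N+2) = 2 * INR N + 2) by (rewrite plus_INR, mult_INR; simpl; ring).
  assert (I2 : INR (2*N+1) = 2 * INR N + 1) by (rewrite plus_INR, mult_INR; simpl; ring).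
  rewrite I1, I2 in W. rewrite I1. pose proof (pos_INR N).
  assert (EA : WA (S N) = (2*INR N + 1) * WA N / (2*INR N + 2)) by (rewrite <- W; field; lra).
  rewrite EA in L. replace (9 * WA N / (2*INR N + 2)) with (9 * (WA N - (2*INR N + 1) * WA N / (2*INR N + 2))). lra.
  field. lra.
Qed.

Theorem basel : is_series li (PI^2/6).
Proof.
  apply series_lim.
  apply (is_lim_seq_ext (fun N => PI^2/6 - 2 * WB N / WA N)).
  { intros N. rewrite basel_partial. reflexivity. }
  assert (HH : forall u : nat -> R, is_lim_seq u 0 -> is_lim_seq (fun N => PI^2/6 - u N) (PI^2/6)).
  { intros u Hu. pose proof (is_lim_seq_minus' (fun _ => PI^2/6) u _ _ (is_lim_seq_const _) Hu) as K.
    rewrite Rminus_0_r in K. exact K. }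
  apply (HH (fun N => 2 * WB N / WA N)).
  apply (is_lim_seq_le_le (fun _ => 0) _ (fun N => 9 * / (INR N + 1))).
  - intros N. pose proof (WA_pos N). pose proof (WB_nonneg N). pose proof (WB_bound N). split.
    apply Rmult_le_pos. lra. left; apply Rinv_0_lt_compat; lra.
    assert (I1 : INR (2*N+2) = (1+1) * INR N + (1+1)) by (rewrite plus_INR, mult_INR; simpl; ring).
    rewrite I1 in H1. pose proof (pos_INR N).
    apply (Rmult_le_reg_r (WA N)). lra. unfold Rdiv. rewrite Rmult_assoc, Rinv_l by lra.
    apply (Rmult_le_reg_r ((1+1)*INR N + (1+1))). lra.
    replace (9 * / (INR N + 1) * WA N * ((1 + 1) * INR N + (1 + 1))) with (18 * WA N) by (field; lra).
    apply (Rmult_le_compat_r ((1 + 1) * INR N + (1 + 1))) in H1. 2: lra.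
    replace (9 * WA N / ((1 + 1) * INR N + (1 + 1)) * ((1 + 1) * INR N + (1 + 1))) with (9 * WA N) in H1 by (field; lra).
    nra.
  - apply is_lim_seq_const.
  - replace (Finite 0) with (Rbar_mult 9 0) by (simpl; f_equal; ring). apply is_lim_seq_scal_l. apply lim_inv_n1.
Qed.

Fixpoint cc (n : nat) : R := match n with 0%nat => 1 | S m => cc m * (2 * INR m + 1) / (2 * INR m + 2) end.

Lemma cc_S n : cc (S n) = cc n * (2 * INR n + 1) / (2 * INR n + 2).
Proof. reflexivity. Qed.

Lemma cc_bounds n : 0 < cc n <= 1.
Proof.
  induction n. simpl; lra. rewrite cc_S. pose proof (pos_INR n).
  split. apply Rdiv_lt_0_compat; nra.
  apply (Rmult_le_reg_r (2 * INR n + 2)). lra. unfold Rdiv. rewrite Rmult_assoc, Rinv_l by lra. nra.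
Qed.

Lemma harm_bounds n : 0 <= harmonic n <= INR n.
Proof.
  induction n. simpl; lra. change (harmonic (S n)) with (harmonic n + / INR (S n)). rewrite S_INR.
  pose proof (pos_INR n). assert (0 < / (INR n + 1) <= 1).
  { split. apply Rinv_0_lt_compat; lra. rewrite <- Rinv_1. apply Rinv_le_contravar; lra. }
  lra.
Qed.

Definition cG n := cc n / INR n.
Definition cT n := cc n / INR n ^ 2.
Definition cE n := cc n * harmonic n.
Definition cQ n := cc n * harmonic n / INR n.
Definition ll n := / INR n.

Definition rad1 (a : nat -> R) := forall x, Rabs x < 1 -> Rbar_lt (Rabs x) (CV_radius a).

Lemma inv_INR_le1 n : 0 <= / INR n <= 1.
Proof.
  destruct n. simpl. rewrite Rinv_0. lra.
  rewrite S_INR. pose proof (pos_INR n). split. left; apply Rinv_0_lt_compat; lra.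
  rewrite <- Rinv_1. apply Rinv_le_contravar; lra.
Qed.

Lemma rad_cc : rad1 cc.
Proof. unfold rad1; apply (rad_bounded _ 1). intros n. destruct (cc_bounds n). rewrite Rabs_pos_eq; lra. Qed.
Lemma rad_cG : rad1 cG.
Proof. unfold rad1; apply (rad_bounded _ 1). intros n. unfold cG. destruct (cc_bounds n). destruct (inv_INR_le1 n).
  rewrite Rabs_pos_eq; unfold Rdiv; nra. Qed.
Lemma rad_cT : rad1 cT.
Proof. unfold rad1; apply (rad_bounded _ 1). intros n. unfold cT. destruct (cc_bounds n). destruct (inv_INR_le1 n).
  unfold Rdiv. rewrite <- pow_inv. rewrite Rabs_pos_eq; simpl; nra. Qed.
Lemma rad_ll : rad1 ll.
Proof. unfold rad1; apply (rad_bounded _ 1). intros n. unfold ll. destruct (inv_INR_le1 n). rewrite Rabs_pos_eq; lra. Qed.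
Lemma rad_li : rad1 li.
Proof. unfold rad1; apply (rad_bounded _ 1). intros n. unfold li. destruct (inv_INR_le1 n).
  rewrite <- pow_inv. rewrite Rabs_pos_eq; simpl; nra. Qed.
Lemma cQ_bounds n : 0 <= cQ n <= 1.
Proof.
  unfold cQ. destruct (cc_bounds n). destruct (harm_bounds n). destruct n.
  simpl. unfold Rdiv. rewrite Rinv_0. lra. pose proof (pos_INR n). rewrite S_INR in *.
  split. apply Rmult_le_pos; [nra| left; apply Rinv_0_lt_compat; lra].
  apply (Rmult_le_reg_r (INR n + 1)). lra. unfold Rdiv. rewrite Rmult_assoc, Rinv_l by lra. nra.
Qed.
Lemma rad_cQ : rad1 cQ.
Proof. unfold rad1; apply (rad_bounded _ 1). intros n. destruct (cQ_bounds n). rewrite Rabs_pos_eq; lra. Qed.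

Lemma incr_derive (a : nat -> R) n : PS_incr_1 (PS_derive a) n = INR n * a n.
Proof. destruct n. simpl. symmetry; apply Rmult_0_l. reflexivity. Qed.

Lemma E_from_Q n : cE n = INR n * cQ n.
Proof. unfold cE, cQ. destruct n. simpl. ring. field. rewrite S_INR; pose proof (pos_INR n); lra. Qed.

Lemma rad_cE : rad1 cE.
Proof.
  intros x Hx. rewrite (CV_radius_ext cE (PS_incr_1 (PS_derive cQ))).
  rewrite CV_radius_incr_1, CV_radius_derive. apply rad_cQ, Hx.
  intros n. rewrite incr_derive. apply E_from_Q.
Qed.

Lemma rad_derive a : rad1 a -> rad1 (PS_derive a).
Proof. intros H x Hx. rewrite CV_radius_derive. apply H, Hx. Qed.
Lemma rad_decr a : rad1 a -> rad1 (PS_decr_1 a).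
Proof. intros H x Hx. rewrite CV_radius_decr_1. apply H, Hx. Qed.
Lemma rad_xD a : rad1 a -> rad1 (fun n => INR n * a n).
Proof. intros H x Hx. rewrite <- (CV_radius_ext _ _ (incr_derive a)). rewrite CV_radius_incr_1, CV_radius_derive. apply H, Hx. Qed.

Lemma ps_xD a x : PSeries (fun n => INR n * a n) x = x * PSeries (PS_derive a) x.
Proof. rewrite <- PSeries_incr_1. apply PSeries_ext. intros n. rewrite incr_derive. reflexivity. Qed.

Lemma ps_decr a x : rad1 a -> Rabs x < 1 -> PSeries a x = a 0%nat + x * PSeries (PS_decr_1 a) x.
Proof. intros H Hx. apply PSeries_decr_1. apply CV_radius_inside, H, Hx. Qed.

Lemma ps_is a x : rad1 a -> Rabs x < 1 -> is_series (fun k => a k * x ^ k) (PSeries a x).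
Proof. intros H Hx. apply Series_correct. apply ex_ps. apply H, Hx. Qed.

Lemma isS_plus (a b : nat -> R) la lb : is_series a la -> is_series b lb -> is_series (fun n => a n + b n) (la + lb).
Proof. intros. apply (@is_series_plus R_AbsRing R_NormedModule); auto. Qed.
Lemma isS_scal (a : nat -> R) c la : is_series a la -> is_series (fun n => c * a n) (c * la).
Proof. intros. apply (@is_series_scal R_AbsRing R_NormedModule); auto. Qed.

Lemma ps_lin (e a b d : nat -> R) alpha x : rad1 a -> rad1 b -> rad1 d -> Rabs x < 1 ->
  (forall n, e n = a n + alpha * b n + d n) ->
  PSeries e x = PSeries a x + alpha * PSeries b x + PSeries d x.
Proof.
  intros Ha Hb Hd Hx He.
  pose proof (isS_plus _ _ _ _ (isS_plus _ _ _ _ (ps_is a x Ha Hx) (isS_scal _ alpha _ (ps_is b x Hb Hx))) (ps_is d x Hd Hx)) as K.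
  unfold PSeries. apply is_series_unique. eapply is_series_ext. 2: exact K.
  intros n. simpl. rewrite He. ring.
Qed.

Definition zf (t : R) := 4 * t / (1 + t) ^ 2.
Definition zd (t : R) := 4 * (1 - t) / (1 + t) ^ 3.

Lemma zf_range t : 0 <= t < 1 -> 0 <= zf t < 1.
Proof.
  intros H. unfold zf. split. apply Rmult_le_pos. lra. left; apply Rinv_0_lt_compat; nra.
  apply (Rmult_lt_reg_r ((1+t)^2)). nra. unfold Rdiv. rewrite Rmult_assoc, Rinv_l by nra. nra.
Qed.

Lemma zf_deriv t : 0 <= t -> is_derive zf t (zd t).
Proof. intros H. unfold zf, zd. auto_derive. nra. field. lra. Qed.

Lemma ps_comp a t : rad1 a -> 0 <= t < 1 ->
  is_derive (fun t => PSeries a (zf t)) t (zd t * PSeries (PS_derive a) (zf t)).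
Proof.
  intros Ha Ht. apply (d_comp (PSeries a) zf). apply is_derive_PSeries. apply Ha.
  destruct (zf_range t Ht). rewrite Rabs_pos_eq; lra. apply zf_deriv; lra.
Qed.

Lemma ps_lin2 (e a b : nat -> R) alpha x : rad1 a -> rad1 b -> Rabs x < 1 ->
  (forall n, e n = a n + alpha * b n) ->
  PSeries e x = PSeries a x + alpha * PSeries b x.
Proof.
  intros Ha Hb Hx He.
  pose proof (isS_plus _ _ _ _ (ps_is a x Ha Hx) (isS_scal _ alpha _ (ps_is b x Hb Hx))) as K.
  unfold PSeries. apply is_series_unique. eapply is_series_ext. 2: exact K.
  intros n. simpl. rewrite He. ring.
Qed.

Lemma abs_lt1 t : 0 <= t < 1 -> Rabs t < 1.
Proof. intros. rewrite Rabs_pos_eq; lra. Qed.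
Lemma zf_abs t : 0 <= t < 1 -> Rabs (zf t) < 1.
Proof. intros. apply abs_lt1, zf_range; auto. Qed.

Lemma ratio_deriv t : 0 <= t -> is_derive (fun t => (1-t)/(1+t)) t (-2/(1+t)^2).
Proof. intros. auto_derive. lra. field. lra. Qed.

Lemma zf_0 : zf 0 = 0.
Proof. unfold zf. field. Qed.

Lemma P_closed v : 0 <= v < 1 -> PSeries cc (zf v) = (1+v)/(1-v).
Proof.
  intros Hv.
  assert (C := const_on (fun t => PSeries cc (zf t) * ((1-t)/(1+t))) v (proj1 Hv)).
  cbv beta in C. rewrite zf_0, PSeries_0 in C. simpl cc in C.
  assert (E : PSeries cc (zf v) * ((1 - v) / (1 + v)) = 1).
  { rewrite C. field. intros t Ht.
    assert (Ht' : 0 <= t < 1) by lra.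
    eapply d_eq. apply d_mult. apply ps_comp. apply rad_cc. exact Ht'. apply ratio_deriv. lra.
    assert (ID := ps_lin2 (PS_derive cc) (fun n => INR n * cc n) cc (/2) (zf t) (rad_xD _ rad_cc) rad_cc (zf_abs t Ht')).
    rewrite ps_xD in ID.
    assert (ID' : forall n, PS_derive cc n = INR n * cc n + / 2 * cc n).
    { intros n. unfold PS_derive. rewrite cc_S. rewrite S_INR. field. pose proof (pos_INR n). lra. }
    specialize (ID ID').
    set (D := PSeries (PS_derive cc) (zf t)) in *. set (P := PSeries cc (zf t)) in *.
    assert (P = 2 * D * (1 - zf t)) by lra. rewrite H. unfold zf, zd. field. lra. }
  apply (Rmult_eq_reg_r ((1-v)/(1+v))). rewrite E. field. lra.
  apply Rgt_not_eq. apply Rdiv_lt_0_compat; lra.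
Qed.

Lemma zf_pos t : 0 < t < 1 -> 0 < zf t.
Proof. intros. unfold zf. apply Rdiv_lt_0_compat; nra. Qed.

Lemma P1_closed t : 0 <= t < 1 -> PSeries (PS_decr_1 cc) (zf t) = (1+t)^2/(2*(1-t)).
Proof.
  intros Ht. destruct (Req_dec t 0) as [->|Hn].
  - rewrite zf_0, PSeries_0. unfold PS_decr_1. rewrite cc_S. simpl. field.
  - assert (Hz := zf_pos t ltac:(lra)).
    pose proof (ps_decr cc (zf t) rad_cc (zf_abs t Ht)) as D. rewrite P_closed in D by lra.
    simpl cc in D. apply (Rmult_eq_reg_l (zf t)). 2: lra.
    replace (zf t * PSeries (PS_decr_1 cc) (zf t)) with ((1+t)/(1-t) - 1) by lra.
    unfold zf. field. lra.
Qed.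

Lemma ln1p_deriv t : 0 <= t -> is_derive (fun t => ln (1+t)) t (/(1+t)).
Proof. intros. auto_derive. lra. field. lra. Qed.
Lemma ln1m_deriv t : t < 1 -> is_derive (fun t => ln (1-t)) t (-/(1-t)).
Proof. intros. auto_derive. lra. field. lra. Qed.

Lemma G_closed v : 0 <= v < 1 -> PSeries cG (zf v) = 2 * ln (1+v).
Proof.
  intros Hv.
  assert (C := const_on (fun t => PSeries cG (zf t) - 2 * ln (1+t)) v (proj1 Hv)).
  cbv beta in C. rewrite zf_0, PSeries_0, Rplus_0_r, ln_1 in C.
  replace (cG 0%nat) with 0 in C by (unfold cG; simpl; unfold Rdiv; rewrite Rinv_0; ring).
  enough (PSeries cG (zf v) - 2 * ln (1 + v) = 0) by lra. rewrite C. ring.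
  intros t Ht. assert (Ht' : 0 <= t < 1) by lra.
  eapply d_eq. apply d_minus. apply ps_comp. apply rad_cG. exact Ht'.
  apply is_derive_scal. apply ln1p_deriv. lra.
  rewrite (PSeries_ext _ (PS_decr_1 cc)). rewrite P1_closed by lra. unfold zd. field. lra.
  intros n. unfold PS_derive, PS_decr_1, cG. field. rewrite S_INR; pose proof (pos_INR n); lra.
Qed.

Lemma geom_ps x : Rabs x < 1 -> PSeries (fun _ => 1) x = / (1 - x).
Proof.
  intros H. unfold PSeries. apply is_series_unique. eapply is_series_ext. 2: apply is_series_geom, H.
  intros; simpl; ring.
Qed.

Lemma L_closed v : 0 <= v < 1 -> PSeries ll v = - ln (1 - v).
Proof.
  intros Hv.
  assert (C := const_on (fun t => PSeries ll t + ln (1-t)) v (proj1 Hv)).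
  cbv beta in C. rewrite PSeries_0, Rminus_0_r, ln_1 in C.
  replace (ll 0%nat) with 0 in C by (unfold ll; simpl; rewrite Rinv_0; ring).
  enough (PSeries ll v + ln (1 - v) = 0) by lra. rewrite C. ring.
  intros t Ht. assert (Ht' : 0 <= t < 1) by lra.
  eapply d_eq. apply d_plus. apply is_derive_PSeries. apply rad_ll, abs_lt1, Ht'.
  apply ln1m_deriv. lra.
  rewrite (PSeries_ext _ (fun _ => 1)). rewrite geom_ps by (apply abs_lt1; lra). ring.
  intros n. unfold PS_derive, ll. field. rewrite S_INR; pose proof (pos_INR n); lra.
Qed.

Definition K (t : R) := PSeries (PS_decr_1 ll) t.

Lemma Li2_deriv t : 0 <= t < 1 -> is_derive (PSeries li) t (K t).
Proof.
  intros Ht. eapply d_eq. apply is_derive_PSeries. apply rad_li, abs_lt1, Ht.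
  unfold K. apply PSeries_ext. intros n. unfold PS_derive, PS_decr_1, li, ll. field.
  rewrite S_INR; pose proof (pos_INR n); lra.
Qed.

Lemma K_0 : K 0 = 1.
Proof. unfold K. rewrite PSeries_0. unfold PS_decr_1, ll. simpl. apply Rinv_1. Qed.

Lemma K_closed t : 0 < t < 1 -> K t = - ln (1 - t) / t.
Proof.
  intros Ht. pose proof (ps_decr ll t rad_ll (abs_lt1 t ltac:(lra))) as D.
  rewrite L_closed in D by lra.
  replace (ll 0%nat) with 0 in D by (unfold ll; simpl; rewrite Rinv_0; ring).
  unfold K. apply (Rmult_eq_reg_l t). 2: lra. rewrite D. field. lra.
Qed.

Lemma cE_rec n : PS_derive cE n = INR n * cE n + / 2 * cE n + PS_decr_1 cc n.
Proof.
  unfold PS_derive, PS_decr_1, cE. change (harmonic (S n)) with (harmonic n + / INR (S n)).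
  rewrite cc_S. rewrite S_INR. field. pose proof (pos_INR n). lra.
Qed.

Lemma E_closed v : 0 <= v < 1 -> PSeries cE (zf v) = - 2 * ln (1 - v) * (1 + v) / (1 - v).
Proof.
  intros Hv.
  assert (C := const_on (fun t => PSeries cE (zf t) * ((1-t)/(1+t)) + 2 * ln (1-t)) v (proj1 Hv)).
  cbv beta in C. rewrite zf_0, PSeries_0, Rminus_0_r, ln_1 in C.
  replace (cE 0%nat) with 0 in C by (unfold cE; simpl; ring).
  assert (E : PSeries cE (zf v) * ((1 - v) / (1 + v)) + 2 * ln (1 - v) = 0).
  { rewrite C. field. intros t Ht.
    assert (Ht' : 0 <= t < 1) by lra.
    eapply d_eq. apply d_plus. apply d_mult. apply ps_comp. apply rad_cE. exact Ht'. apply ratio_deriv. lra.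
    apply is_derive_scal. apply ln1m_deriv. lra.
    assert (ID := ps_lin (PS_derive cE) (fun n => INR n * cE n) cE (PS_decr_1 cc) (/2) (zf t) (rad_xD _ rad_cE) rad_cE (rad_decr _ rad_cc) (zf_abs t Ht') cE_rec).
    rewrite ps_xD, P1_closed in ID by lra.
    set (D := PSeries (PS_derive cE) (zf t)) in *. set (P := PSeries cE (zf t)) in *.
    assert (P = 2 * (D * (1 - zf t) - (1 + t) ^ 2 / (2 * (1 - t)))) by lra. rewrite H. unfold zf, zd. field. lra. }
  apply (Rmult_eq_reg_r ((1-v)/(1+v))). replace (PSeries cE (zf v) * ((1 - v) / (1 + v))) with (- 2 * ln (1-v)) by lra.
  field. lra.
  apply Rgt_not_eq. apply Rdiv_lt_0_compat; lra.
Qed.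

Lemma cE_1 : cE 1%nat = /2.
Proof. unfold cE. simpl. field. Qed.

Lemma Q_closed v : 0 <= v < 1 -> PSeries cQ (zf v) = 2 * PSeries li v.
Proof.
  intros Hv.
  assert (C := const_on (fun t => PSeries cQ (zf t) - 2 * PSeries li t) v (proj1 Hv)).
  cbv beta in C. rewrite zf_0, !PSeries_0 in C.
  replace (cQ 0%nat) with 0 in C by (unfold cQ; simpl; unfold Rdiv; rewrite Rinv_0; ring).
  replace (li 0%nat) with 0 in C by (unfold li; simpl; rewrite Rmult_0_l, Rinv_0; ring).
  enough (PSeries cQ (zf v) - 2 * PSeries li v = 0) by lra. rewrite C. ring.
  intros t Ht. assert (Ht' : 0 <= t < 1) by lra.
  eapply d_eq. apply d_minus. apply ps_comp. apply rad_cQ. exact Ht'.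
  apply is_derive_scal. apply Li2_deriv. exact Ht'.
  rewrite (PSeries_ext _ (PS_decr_1 cE)).
  2: { intros n. unfold PS_derive, PS_decr_1. rewrite E_from_Q. reflexivity. }
  destruct (Req_dec t 0) as [->|Hn].
  - rewrite zf_0, PSeries_0, K_0. unfold PS_decr_1. rewrite cE_1. unfold zd. field.
  - assert (Hz := zf_pos t ltac:(lra)).
    pose proof (ps_decr cE (zf t) rad_cE (zf_abs t Ht')) as D. rewrite E_closed in D by lra.
    replace (cE 0%nat) with 0 in D by (unfold cE; simpl; ring).
    rewrite K_closed by lra.
    replace (PSeries (PS_decr_1 cE) (zf t)) with ((- 2 * ln (1 - t) * (1 + t) / (1 - t)) / zf t).
    unfold zd, zf. field. repeat split; lra.
    rewrite D. field. lra.
Qed.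

Lemma sq_deriv t : is_derive (fun t => t^2) t (2 * t).
Proof. auto_derive. trivial. ring. Qed.

Lemma ln_1m_sq t : 0 <= t < 1 -> ln (1 - t^2) = ln (1-t) + ln (1+t).
Proof. intros. rewrite <- ln_mult by lra. f_equal. ring. Qed.

Lemma T_closed v : 0 <= v < 1 -> PSeries cT (zf v) = 2 * PSeries li v - PSeries li (v^2) - 2 * (ln (1+v))^2.
Proof.
  intros Hv.
  assert (C := const_on (fun t => PSeries cT (zf t) - (2 * PSeries li t - PSeries li (t^2) - 2 * (ln (1+t))^2)) v (proj1 Hv)).
  cbv beta in C. rewrite zf_0 in C. replace (0^2) with 0 in C by ring. rewrite !PSeries_0, Rplus_0_r, ln_1 in C.
  replace (cT 0%nat) with 0 in C by (unfold cT; simpl; unfold Rdiv; rewrite Rmult_0_l, Rinv_0; ring).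
  replace (li 0%nat) with 0 in C by (unfold li; simpl; rewrite Rmult_0_l, Rinv_0; ring).
  enough (PSeries cT (zf v) - (2 * PSeries li v - PSeries li (v^2) - 2 * (ln (1+v))^2) = 0) by lra. rewrite C. ring.
  intros t Ht. assert (Ht' : 0 <= t < 1) by lra.
  assert (Ht2 : 0 <= t^2 < 1) by (split; nra).
  eapply d_eq. apply d_minus. apply ps_comp. apply rad_cT. exact Ht'.
  apply d_minus. apply d_minus. apply is_derive_scal. apply Li2_deriv. exact Ht'.
  apply (d_comp (PSeries li) (fun t => t^2)). apply Li2_deriv. exact Ht2. apply sq_deriv.
  apply is_derive_scal. apply (d_comp (fun x => x^2) (fun t => ln (1+t))). apply sq_deriv. apply ln1p_deriv. lra.
  rewrite (PSeries_ext _ (PS_decr_1 cG)).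
  2: { intros n. unfold PS_derive, PS_decr_1, cT, cG. field. rewrite S_INR; pose proof (pos_INR n); lra. }
  destruct (Req_dec t 0) as [->|Hn].
  - rewrite zf_0, PSeries_0, K_0. replace (0^2) with 0 by ring. rewrite K_0.
    unfold PS_decr_1, cG. rewrite cc_S. simpl. unfold zd. rewrite Rplus_0_r, ln_1. field.
  - assert (Hz := zf_pos t ltac:(lra)).
    pose proof (ps_decr cG (zf t) rad_cG (zf_abs t Ht')) as D. rewrite G_closed in D by lra.
    replace (cG 0%nat) with 0 in D by (unfold cG; simpl; unfold Rdiv; rewrite Rinv_0; ring).
    rewrite (K_closed t) by lra. rewrite (K_closed (t^2)) by (split; nra). rewrite ln_1m_sq by lra.
    replace (PSeries (PS_decr_1 cG) (zf t)) with (2 * ln (1 + t) / zf t).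
    unfold zd, zf. field. repeat split; lra.
    rewrite D. field. lra.
Qed.

Definition vm (m : nat) : R := 1 - / (INR m + 2).

Lemma vm_range m : 0 <= vm m < 1.
Proof.
  unfold vm. pose proof (pos_INR m). assert (0 < / (INR m + 2) <= /2).
  { split. apply Rinv_0_lt_compat; lra. apply Rinv_le_contravar; lra. } lra.
Qed.

Lemma vm_lim : is_lim_seq vm 1.
Proof.
  unfold vm. assert (K : is_lim_seq (fun m => / (INR m + 2)) 0).
  { pose proof lim_inv_n1 as L1. apply (is_lim_seq_incr_1 _ 0) in L1. apply (is_lim_seq_ext (fun n => / (INR (S n) + 1))). 2: exact L1.
    intros n. rewrite S_INR. f_equal. ring. }
  pose proof (is_lim_seq_minus' (fun _ => 1) _ _ _ (is_lim_seq_const 1) K) as K2.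
  rewrite Rminus_0_r in K2. exact K2.
Qed.

Lemma cont_pt_of_deriv (f : R -> R) x d : is_derive f x d -> continuity_pt f x.
Proof.
  intros H. apply continuity_pt_filterlim. apply (@ex_derive_continuous R_AbsRing R_NormedModule). exists d; exact H.
Qed.

Lemma zvm_lim : is_lim_seq (fun m => zf (vm m)) 1.
Proof.
  replace (Finite 1) with (Finite (zf 1)) by (unfold zf; f_equal; field).
  apply is_lim_seq_continuous. apply (cont_pt_of_deriv _ _ _ (zf_deriv 1 ltac:(lra))). apply vm_lim.
Qed.

Lemma ln_vm_lim : is_lim_seq (fun m => ln (1 + vm m)) (ln 2).
Proof.
  replace 2 with (1+1) by ring.
  apply (is_lim_seq_continuous (fun t => ln (1+t))). apply (cont_pt_of_deriv _ _ _ (ln1p_deriv 1 ltac:(lra))). apply vm_lim.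
Qed.

Lemma li_nonneg n : 0 <= li n.
Proof. unfold li. rewrite <- pow_inv. apply pow2_ge_0. Qed.

Lemma Li2_lim1 : is_lim_seq (fun m => PSeries li (vm m)) (PI^2/6).
Proof. apply abel_pos. apply li_nonneg. apply vm_range. apply vm_lim. apply basel. Qed.

Lemma Li2_lim2 : is_lim_seq (fun m => PSeries li (vm m ^ 2)) (PI^2/6).
Proof.
  apply (abel_pos li (fun m => vm m ^ 2)). apply li_nonneg.
  intros m. destruct (vm_range m). split; nra. apply lim_pow, vm_lim. apply basel.
Qed.

Lemma zvm_range m : 0 <= zf (vm m) < 1.
Proof. apply zf_range, vm_range. Qed.

Lemma ex_at (a : nat -> R) m : rad1 a -> ex_series (fun k => a k * zf (vm m) ^ k).
Proof. intros H. apply ex_ps. apply H. apply zf_abs, vm_range. Qed.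

Lemma cG_nonneg n : 0 <= cG n.
Proof. unfold cG. destruct (cc_bounds n). destruct (inv_INR_le1 n). unfold Rdiv; nra. Qed.
Lemma cT_nonneg n : 0 <= cT n.
Proof. unfold cT. destruct (cc_bounds n). unfold Rdiv. rewrite <- pow_inv. pose proof (pow2_ge_0 (/ INR n)). nra. Qed.

Lemma G_series : is_series cG (2 * ln 2).
Proof.
  apply (tauber cG (fun m => zf (vm m))). apply cG_nonneg. apply zvm_range. intros; apply ex_at, rad_cG. apply zvm_lim.
  eapply is_lim_seq_ext. intros m. symmetry. apply G_closed, vm_range.
  assert (K := is_lim_seq_scal_l _ 2 _ ln_vm_lim). exact K.
Qed.

Lemma T_series : is_series cT (PI^2/6 - 2 * (ln 2)^2).
Proof.
  apply (tauber cT (fun m => zf (vm m))). apply cT_nonneg. apply zvm_range. intros; apply ex_at, rad_cT. apply zvm_lim.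
  eapply is_lim_seq_ext. intros m. symmetry. apply T_closed, vm_range.
  replace (PI^2/6 - 2 * (ln 2)^2) with (2 * (PI^2/6) - PI^2/6 - 2 * ((ln 2) * (ln 2))) by ring.
  apply is_lim_seq_minus'. apply is_lim_seq_minus'.
  assert (K := is_lim_seq_scal_l _ 2 _ Li2_lim1). exact K. apply Li2_lim2.
  assert (K := is_lim_seq_scal_l _ 2 _ (is_lim_seq_mult' _ _ _ _ ln_vm_lim ln_vm_lim)).
  eapply is_lim_seq_ext. 2: exact K. intros; simpl; ring.
Qed.

Lemma Q_series : is_series cQ (2 * (PI^2/6)).
Proof.
  apply (tauber cQ (fun m => zf (vm m))). intros; apply cQ_bounds. apply zvm_range. intros; apply ex_at, rad_cQ. apply zvm_lim.
  eapply is_lim_seq_ext. intros m. symmetry. apply Q_closed, vm_range.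
  assert (K := is_lim_seq_scal_l _ 2 _ Li2_lim1). exact K.
Qed.

Lemma fact_INR_S n : INR (Factorial.fact (S n)) = INR (S n) * INR (Factorial.fact n).
Proof. rewrite fact_simpl, mult_INR. reflexivity. Qed.

Lemma cb_eq n : central_binom n / 2 ^ (2 * n) = cc n.
Proof.
  unfold central_binom, Binomial.C. replace (2 * n - n)%nat with n by lia.
  induction n.
  - simpl. field.
  - replace (2 * S n)%nat with (S (S (2 * n))) by lia.
    rewrite !fact_INR_S. rewrite cc_S, <- IHn.
    rewrite !S_INR, mult_INR. simpl INR.
    pose proof (INR_fact_lt_0 n). pose proof (INR_fact_lt_0 (2*n)). pose proof (pos_INR n).
    simpl pow. field. repeat split; try lra. apply pow_nonzero. lra.
Qed.

Lemma term_eq n : term n = cE n / (INR n + 1) ^ 2.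
Proof.
  unfold term, cE. rewrite <- cb_eq. field. split. apply pow_nonzero; lra.
  pose proof (pos_INR n). nra.
Qed.

Lemma cT0 : cT 0%nat = 0.
Proof. unfold cT; simpl; unfold Rdiv; rewrite Rmult_0_l, Rinv_0; ring. Qed.
Lemma cQ0 : cQ 0%nat = 0.
Proof. unfold cQ; simpl; unfold Rdiv; rewrite Rinv_0; ring. Qed.
Lemma cG0 : cG 0%nat = 0.
Proof. unfold cG; simpl; unfold Rdiv; rewrite Rinv_0; ring. Qed.

Definition Rm (N : nat) : R := cc (S (S N)) * harmonic (S N) * (4 + 2 / (INR (S N) + 1)).

Lemma partial_id N : sum_f_R0 (fun k => term (S k)) N =
  2 * sum_f_R0 cT (S N) - 2 * sum_f_R0 cQ (S N) + 4 * sum_f_R0 cG (S N) - Rm N.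
Proof.
  induction N.
  - simpl sum_f_R0. rewrite term_eq. rewrite cT0, cQ0, cG0. unfold cT, cQ, cG, cE, Rm.
    simpl. field.
  - rewrite tech5. rewrite IHN. rewrite (tech5 cT (S N)), (tech5 cQ (S N)), (tech5 cG (S N)).
    rewrite term_eq. unfold cT, cQ, cG, cE, Rm.
    change (harmonic (S (S N))) with (harmonic (S N) + / INR (S (S N))).
    rewrite (cc_S (S (S N))), (cc_S (S N)).
    rewrite !S_INR. pose proof (pos_INR N). field. lra.
Qed.

Lemma cc_decr n : cc (S n) <= cc n.
Proof.
  rewrite cc_S. destruct (cc_bounds n). pose proof (pos_INR n).
  apply (Rmult_le_reg_r (2 * INR n + 2)). lra. unfold Rdiv. rewrite Rmult_assoc, Rinv_l by lra. nra.
Qed.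

Lemma harm_incr n : harmonic n <= harmonic (S n).
Proof.
  change (harmonic (S n)) with (harmonic n + / INR (S n)). rewrite S_INR.
  pose proof (pos_INR n). assert (0 < / (INR n + 1)) by (apply Rinv_0_lt_compat; lra). lra.
Qed.

Lemma harm_mono m j : harmonic m <= harmonic (m + j).
Proof. induction j. rewrite Nat.add_0_r; lra. rewrite Nat.add_succ_r. pose proof (harm_incr (m+j)). lra. Qed.

Lemma cc_lower m j : cc m * (1 - INR j / (2 * INR m + 2)) <= cc (m + j).
Proof.
  pose proof (pos_INR m). induction j.
  - rewrite Nat.add_0_r. simpl. unfold Rdiv. rewrite Rmult_0_l. lra.
  - rewrite Nat.add_succ_r, cc_S. rewrite S_INR.
    destruct (cc_bounds m). destruct (cc_bounds (m+j)). rewrite plus_INR in *. pose proof (pos_INR j).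
    destruct (Rle_dec 0 (1 - INR j / (2 * INR m + 2))) as [Hp|Hn].
    + set (a := INR j / (2 * INR m + 2)) in *.
      assert (Ea : (INR j + 1) / (2 * INR m + 2) = a + / (2 * INR m + 2)) by (unfold a; field; lra).
      rewrite Ea.
      assert (Hb : (2 * (INR m + INR j) + 1) / (2 * (INR m + INR j) + 2) = 1 - / (2 * (INR m + INR j) + 2)) by (field; lra).
      replace (cc (m + j) * (2 * (INR m + INR j) + 1) / (2 * (INR m + INR j) + 2)) with (cc (m+j) * (1 - / (2 * (INR m + INR j) + 2))) by (rewrite <- Hb; unfold Rdiv; ring).
      assert (Hi : / (2 * (INR m + INR j) + 2) <= / (2 * INR m + 2)) by (apply Rinv_le_contravar; lra).
      assert (Hi0 : 0 < / (2 * (INR m + INR j) + 2)) by (apply Rinv_0_lt_compat; lra).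
      assert (Hi1 : / (2 * (INR m + INR j) + 2) <= 1) by (rewrite <- Rinv_1; apply Rinv_le_contravar; lra).
      assert (cc m * (1 - a) * (1 - / (2 * (INR m + INR j) + 2)) <= cc (m + j) * (1 - / (2 * (INR m + INR j) + 2))) by nra.
      assert (0 <= a) by (unfold a; apply Rdiv_le_0_compat; lra).
      set (b' := / (2 * (INR m + INR j) + 2)) in *. set (b := / (2 * INR m + 2)) in *.
      assert (0 <= cc m * a * b') by (apply Rmult_le_pos; [apply Rmult_le_pos|]; lra).
      assert (cc m * b' <= cc m * b) by (apply Rmult_le_compat_l; lra).
      lra.
    + assert (0 < cc (m + j) * (2 * (INR m + INR j) + 1) / (2 * (INR m + INR j) + 2)) by (apply Rdiv_lt_0_compat; nra).
      assert (INR j / (2 * INR m + 2) <= (INR j + 1) / (2 * INR m + 2)) by (unfold Rdiv; apply Rmult_le_compat_r; [left; apply Rinv_0_lt_compat; lra| lra]).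
      nra.
Qed.

Lemma U_lower m j : INR j * cc (m + j) * harmonic m / INR (m + j) <= sum_f_R0 cQ (m + j) - sum_f_R0 cQ m.
Proof.
  induction j.
  - rewrite Nat.add_0_r. simpl. unfold Rdiv. lra.
  - rewrite Nat.add_succ_r. rewrite tech5. unfold cQ at 2.
    pose proof (cc_decr (m + j)) as H. destruct (cc_bounds (S (m+j))) as [H0 H1]. pose proof (harm_mono m (S j)) as H2.
    rewrite Nat.add_succ_r in H2. destruct (harm_bounds m) as [H3 H4].
    rewrite !S_INR in *. rewrite plus_INR in *. pose proof (pos_INR m). pose proof (pos_INR j).
    destruct (Req_dec (INR m + INR j) 0) as [E|E].
    + assert (Hj0 : INR j = 0) by lra. rewrite Hj0 in *. rewrite Rmult_0_l in IHj. unfold Rdiv in IHj. rewrite Rmult_0_l in IHj.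
      assert (0 <= cc (S (m + j)) * harmonic (S (m + j)) / (INR m + 0 + 1)) by (apply Rdiv_le_0_compat; nra).
      replace ((0 + 1) * cc (S (m + j)) * harmonic m / (INR m + 0 + 1)) with (cc (S (m + j)) * harmonic m / (INR m + 0 + 1)) by (unfold Rdiv; ring).
      assert (cc (S (m + j)) * harmonic m / (INR m + 0 + 1) <= cc (S (m + j)) * harmonic (S (m + j)) / (INR m + 0 + 1)).
      { unfold Rdiv. apply Rmult_le_compat_r. left; apply Rinv_0_lt_compat; lra. nra. }
      lra.
    + assert (INR j * cc (S (m + j)) * harmonic m / (INR m + INR j + 1) <= INR j * cc (m + j) * harmonic m / (INR m + INR j)).
      { apply (Rmult_le_reg_r ((INR m + INR j + 1) * (INR m + INR j))). nra.
        replace (INR j * cc (S (m + j)) * harmonic m / (INR m + INR j + 1) * ((INR m + INR j + 1) * (INR m + INR j))) with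
          (INR j * cc (S (m + j)) * harmonic m * (INR m + INR j)) by (field; lra).
        replace (INR j * cc (m + j) * harmonic m / (INR m + INR j) * ((INR m + INR j + 1) * (INR m + INR j))) with
          (INR j * cc (m + j) * harmonic m * (INR m + INR j + 1)) by (field; lra).
        assert (0 <= INR j * harmonic m) by nra.
        assert (0 <= cc (m+j)) by (destruct (cc_bounds (m+j)); lra).
        assert (cc (S (m + j)) * (INR m + INR j) <= cc (m + j) * (INR m + INR j + 1)) by nra.
        replace (INR j * cc (S (m + j)) * harmonic m * (INR m + INR j)) with ((INR j * harmonic m) * (cc (S (m + j)) * (INR m + INR j))) by ring.
        replace (INR j * cc (m + j) * harmonic m * (INR m + INR j + 1)) with ((INR j * harmonic m) * (cc (m + j) * (INR m + INR j + 1))) by ring.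
        apply Rmult_le_compat_l; lra. }
      assert (cc (S (m + j)) * harmonic m / (INR m + INR j + 1) <= cc (S (m + j)) * harmonic (S (m + j)) / (INR m + INR j + 1)).
      { unfold Rdiv. apply Rmult_le_compat_r. left; apply Rinv_0_lt_compat; lra. nra. }
      replace ((INR j + 1) * cc (S (m + j)) * harmonic m / (INR m + INR j + 1)) with
        (INR j * cc (S (m + j)) * harmonic m / (INR m + INR j + 1) + cc (S (m + j)) * harmonic m / (INR m + INR j + 1)) by (field; lra).
      lra.
Qed.

Lemma ccH_bound m : cc m * harmonic m <= 4 * (sum_f_R0 cQ (m + m) - sum_f_R0 cQ m).
Proof.
  destruct m.
  - simpl. rewrite cQ0. lra.
  - pose proof (U_lower (S m) (S m)) as U. pose proof (cc_lower (S m) (S m)) as L.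
    rewrite plus_INR in U. set (x := INR (S m)) in *.
    assert (Hx : 0 < x) by (unfold x; rewrite S_INR; pose proof (pos_INR m); lra).
    destruct (harm_bounds (S m)). destruct (cc_bounds (S m + S m)). destruct (cc_bounds (S m)).
    assert (Lh : cc (S m) / 2 <= cc (S m + S m)).
    { assert (cc (S m) / 2 <= cc (S m) * (1 - x / (2 * x + 2))).
      { apply (Rmult_le_reg_r (2 * (2 * x + 2))). lra.
        replace (cc (S m) / 2 * (2 * (2 * x + 2))) with (cc (S m) * (2 * x + 2)) by (field; lra).
        replace (cc (S m) * (1 - x / (2 * x + 2)) * (2 * (2 * x + 2))) with (cc (S m) * (2 * x + 4)) by (field; lra).
        nra. }
      lra. }
    replace (x * cc (S m + S m) * harmonic (S m) / (x + x)) with (cc (S m + S m) * harmonic (S m) / 2) in U by (field; lra).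
    nra.
Qed.

Lemma Rm_bounds N : 0 <= Rm N <= 24 * (sum_f_R0 cQ (S N + S N) - sum_f_R0 cQ (S N)).
Proof.
  unfold Rm. pose proof (ccH_bound (S N)). pose proof (cc_decr (S N)). destruct (cc_bounds (S (S N))).
  destruct (harm_bounds (S N)). rewrite S_INR. pose proof (pos_INR N).
  assert (0 < 2 / (INR N + 1 + 1) <= 2).
  { split. apply Rdiv_lt_0_compat; lra. apply (Rmult_le_reg_r (INR N + 1 + 1)). lra.
    unfold Rdiv. rewrite Rmult_assoc, Rinv_l by lra. lra. }
  split. apply Rmult_le_pos. nra. lra.
  assert (cc (S (S N)) * harmonic (S N) <= cc (S N) * harmonic (S N)) by nra.
  assert (0 <= cc (S (S N)) * harmonic (S N)) by nra.
  nra.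
Qed.

Lemma diff_lim : is_lim_seq (fun N => sum_f_R0 cQ (S N + S N) - sum_f_R0 cQ (S N)) 0.
Proof.
  pose proof (lim_series _ _ Q_series) as HU.
  assert (I1 : forall n, (S n + S n < S (S n) + S (S n))%nat) by (intros; lia).
  assert (I2 : forall n, (S n < S (S n))%nat) by (intros; lia).
  assert (H1 := is_lim_seq_subseq _ _ (fun N => S N + S N)%nat (eventually_subseq _ I1) HU).
  assert (H2 := is_lim_seq_subseq _ _ (fun N => S N)%nat (eventually_subseq _ I2) HU).
  assert (K := is_lim_seq_minus' _ _ _ _ H1 H2). simpl in K. rewrite Rminus_eq_0 in K. exact K.
Qed.

Lemma Rm_lim : is_lim_seq Rm 0.
Proof.
  apply (is_lim_seq_le_le (fun _ => 0) Rm (fun N => 24 * (sum_f_R0 cQ (S N + S N) - sum_f_R0 cQ (S N)))).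
  apply Rm_bounds. apply is_lim_seq_const.
  assert (K := is_lim_seq_scal_l _ 24 _ diff_lim). simpl in K. rewrite Rmult_0_r in K. exact K.
Qed.

Lemma lim_S (a : nat -> R) l : is_series a l -> is_lim_seq (fun N => sum_f_R0 a (S N)) l.
Proof. intros H. apply lim_series in H. apply (is_lim_seq_incr_1 _ l) in H. exact H. Qed.

Theorem mainTheorem4 :
  is_series (fun k : nat => term (S k))
    (- PI ^ 2 / 3 - 4 * (ln 2) ^ 2 + 8 * ln 2).
Proof.
  apply series_lim.
  apply (is_lim_seq_ext (fun N => 2 * sum_f_R0 cT (S N) - 2 * sum_f_R0 cQ (S N) + 4 * sum_f_R0 cG (S N) - Rm N)).
  { intros N. symmetry. apply partial_id. }
  replace (- PI ^ 2 / 3 - 4 * (ln 2) ^ 2 + 8 * ln 2) with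
    (2 * (PI^2/6 - 2 * (ln 2)^2) - 2 * (2 * (PI^2/6)) + 4 * (2 * ln 2) - 0) by field.
  apply is_lim_seq_minus'. apply is_lim_seq_plus'. apply is_lim_seq_minus'.
  - assert (K := is_lim_seq_scal_l _ 2 _ (lim_S _ _ T_series)). exact K.
  - assert (K := is_lim_seq_scal_l _ 2 _ (lim_S _ _ Q_series)). exact K.
  - assert (K := is_lim_seq_scal_l _ 4 _ (lim_S _ _ G_series)). exact K.
  - apply Rm_lim.
Qed.
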